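(* Let $d\in\mathbb N$, $H>0$, $\eta>0$, let $R(x)=\sum_{a\in[d]}\log\frac1{x(a)}$ be the log-barrier on $\Delta_d$, let $x'\in\Delta_d$ have all coordinates positive, let $\ell\in\mathbb R^d$ with $\|\ell\|_\infty\le H$, define $F(x)=\eta\langle x,\ell\rangle+D_R(x,x')$ and $x^+=\arg\min_{x\in\Delta_d}F(x)$. If $\eta\le\frac1{8H}$, then for every $a\in[d]$, $$(1-8\eta\|\ell\|_\infty)x'(a)\le x^+(a)\le(1+8\eta\|\ell\|_\infty)x'(a).$$
   Context: $D_R(x,y)=\sum_a\big(\log\frac{y(a)}{x(a)}+\frac{x(a)-y(a)}{y(a)}\big)$ is the Bregman divergence of the log-barrier. *)

(* Defs.v *)
From mathcomp Require Import all_boot all_order all_algebra.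
From mathcomp Require Import reals exp.
Set Implicit Arguments. Unset Strict Implicit. Unset Printing Implicit Defensive.
Import Order.TTheory GRing.Theory Num.Theory.
Local Open Scope ring_scope.

Definition in_simplex (R : realType) (d : nat) (x : 'I_d -> R) : Prop :=
  (forall a, 0 <= x a) /\ \sum_(a < d) x a = 1.

Definition in_simplex_pos (R : realType) (d : nat) (x : 'I_d -> R) : Prop :=
  (forall a, 0 < x a) /\ \sum_(a < d) x a = 1.

Definition logbarrier (R : realType) (d : nat) (x : 'I_d -> R) : R :=
  \sum_(a < d) ln (1 / x a).

Definition bregman_lb (R : realType) (d : nat) (x y : 'I_d -> R) : R :=
  \sum_(a < d) (ln (y a / x a) + (x a - y a) / y a).

Definition linf (R : realType) (d : nat) (l : 'I_d -> R) : R :=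
  \big[Num.max/0]_(a < d) `|l a|.

Definition dotp (R : realType) (d : nat) (x y : 'I_d -> R) : R :=
  \sum_(a < d) x a * y a.

Definition Fobj (R : realType) (d : nat) (eta : R) (l x' x : 'I_d -> R) : R :=
  eta * dotp x l + bregman_lb x x'.

(* x^+ = argmin_{x in Delta_d} F(x).  F is +oo on the boundary of the simplex
   (log(x'(a)/0) = +oo), so the minimizer lies in the relative interior and
   minimizes F among interior points. *)
Definition is_argmin_F (R : realType) (d : nat) (eta : R) (l x' xp : 'I_d -> R)
  : Prop :=
  in_simplex_pos xp /\
  forall x, in_simplex_pos x -> Fobj eta l x' xp <= Fobj eta l x' x.

(* Main.v *)
Require Import Defs.
From mathcomp Require Import all_boot all_order all_algebra.
From mathcomp Require Import reals exp.
From mathcomp Require Import ring lra.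
Import Order.TTheory GRing.Theory Num.Theory.
Set Implicit Arguments. Unset Strict Implicit.
Local Open Scope ring_scope.

Section H.
Variable R : realType.

Lemma ln_diff_le (p y0 y1 : R) : 0 < p -> 0 < y0 -> 0 < y1 ->
  ln (p / y1) - ln (p / y0) <= (y0 - y1) / y1.
Proof.
move=> hp h0 h1.
rewrite !ln_div ?posrE //.
have -> : ln p - ln y1 - (ln p - ln y0) = ln (y0 / y1).
  by rewrite ln_div ?posrE //; ring.
have -> : y0 / y1 = 1 + (y0 - y1) / y1.
  by field; rewrite gt_eqF.
apply: le_ln1Dx.
have : 0 < y0 / y1 by apply: divr_gt0.
have -> : y0 / y1 = 1 + (y0 - y1) / y1 by field; rewrite gt_eqF.
lra.
Qed.

Lemma le_bigmax0 (I : eqType) (r : seq I) (F : I -> R) i :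
  i \in r -> F i <= \big[Num.max/0]_(j <- r) F j.
Proof.
elim: r => // x r IH; rewrite in_cons big_cons => /orP [/eqP -> | /IH h].
  by rewrite le_max lexx.
by rewrite le_max h orbT.
Qed.

Lemma bigmax0_ge0 (I : Type) (r : seq I) (F : I -> R) :
  0 <= \big[Num.max/0]_(j <- r) F j.
Proof. by elim: r => [|x r IH]; rewrite ?big_nil // big_cons le_max IH orbT. Qed.

Lemma sum2 (d : nat) (f : 'I_d -> R) a b : a != b ->
  (forall i, i != a -> i != b -> f i = 0) -> \sum_(i < d) f i = f a + f b.
Proof.
move=> ab hf.
rewrite (bigD1 a) //= (bigD1 b) /=; last by rewrite eq_sym ab.
rewrite big1 ?addr0 // => i /andP [ia ib]; exact: hf.
Qed.

Lemma sum_lt (d : nat) (f g : 'I_d -> R) a :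
  (forall i, f i <= g i) -> f a < g a -> \sum_(i < d) f i < \sum_(i < d) g i.
Proof.
move=> hle hlt.
rewrite (bigD1 a) //= [X in _ < X](bigD1 a) //=.
by apply: ltr_leD => //; apply: ler_sum.
Qed.

Lemma le_sum_one (d : nat) (f : 'I_d -> R) a :
  (forall i, 0 <= f i) -> f a <= \sum_(i < d) f i.
Proof.
move=> h; rewrite (bigD1 a) //= lerDl; exact: sumr_ge0.
Qed.

Lemma limit_step (A B c : R) : 0 < A -> 0 < B ->
  (forall t, 0 < t -> t < A -> 0 <= c + 1 / (A - t) - 1 / (B + t)) ->
  0 <= c + 1 / A - 1 / B.
Proof.
move=> hA hB ht.
rewrite leNgt; apply/negP => hneg.
set dl := - (c + 1 / A - 1 / B).
have hdl : 0 < dl by rewrite /dl oppr_gt0.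
set t := Num.min (A / 2) (Num.min (dl * A * A / 8) (dl * B * B / 4)).
have t1 : t <= A / 2 by rewrite /t ge_min lexx.
have t2 : t <= dl * A * A / 8 by rewrite /t !ge_min lexx orbT.
have t3 : t <= dl * B * B / 4 by rewrite /t !ge_min lexx !orbT.
have tp : 0 < t.
  rewrite /t !lt_min; apply/and3P; split; apply: divr_gt0 => //;
  by apply: mulr_gt0 => //; apply: mulr_gt0.
have tA : t < A by lra.
have := ht t tp tA.
have e1 : 1 / (A - t) - 1 / A <= dl / 4.
  have -> : 1 / (A - t) - 1 / A = t / (A * (A - t)).
    by field; rewrite ?gt_eqF // ?subr_gt0.
  rewrite ler_pdivrMr; last by apply: mulr_gt0; rewrite ?subr_gt0.
  have h1 : 0 <= A * (A / 2 - t) by apply: mulr_ge0; lra.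
  have h2 : 0 < dl * A by apply: mulr_gt0.
  nra.
have e2 : 1 / B - 1 / (B + t) <= dl / 4.
  have -> : 1 / B - 1 / (B + t) = t / (B * (B + t)).
    by field; rewrite ?gt_eqF // ?addr_gt0.
  rewrite ler_pdivrMr; last by apply: mulr_gt0; rewrite ?addr_gt0.
  have h2 : 0 < dl * B by apply: mulr_gt0.
  nra.
rewrite /dl in e1 e2 hdl; lra.
Qed.


Definition phi (d : nat) (eta : R) (l x' : 'I_d -> R) (i : 'I_d) (z : R) :=
  eta * (z * l i) + (ln (x' i / z) + (z - x' i) / x' i).

Lemma Fobj_sum (d : nat) (eta : R) (l x' x : 'I_d -> R) :
  Fobj eta l x' x = \sum_(i < d) phi eta l x' i (x i).
Proof. by rewrite /Fobj /dotp /bregman_lb mulr_sumr -big_split. Qed.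

Lemma kkt (d : nat) (eta : R) (l x' xp : 'I_d -> R) :
  in_simplex_pos x' -> is_argmin_F eta l x' xp ->
  forall a b, a != b ->
  0 <= (1 / xp a - 1 / x' a - eta * l a) - (1 / xp b - 1 / x' b - eta * l b).
Proof.
move=> [x'pos x'sum] [[xpos xsum] hmin] a b ab.
have -> : (1 / xp a - 1 / x' a - eta * l a) - (1 / xp b - 1 / x' b - eta * l b)
  = (eta * l b - eta * l a - 1 / x' a + 1 / x' b) + 1 / xp a - 1 / xp b by ring.
apply: limit_step => // t tp tA.
pose xt := fun i => if i == a then xp a - t else if i == b then xp b + t else xp i.
have xta : xt a = xp a - t by rewrite /xt eqxx.
have xtb : xt b = xp b + t by rewrite /xt eq_sym (negbTE ab) eqxx.
have xto : forall i, i != a -> i != b -> xt i = xp i.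
  by move=> i ia ib; rewrite /xt (negbTE ia) (negbTE ib).
have xtpos : in_simplex_pos xt.
  split.
    move=> i; case: (eqVneq i a) => [->|ia]; first by rewrite xta subr_gt0.
    case: (eqVneq i b) => [->|ib]; first by rewrite xtb addr_gt0.
    by rewrite xto.
  have : \sum_(i < d) xt i - \sum_(i < d) xp i = 0.
    rewrite -sumrB (sum2 (f := fun i => xt i - xp i) ab).
      by rewrite xta xtb; ring.
    by move=> i ia ib; rewrite xto ?subrr.
  rewrite xsum; lra.
have := hmin xt xtpos.
rewrite !Fobj_sum -subr_ge0 -sumrB.
rewrite (sum2 (f := fun i => phi eta l x' i (xt i) - phi eta l x' i (xp i)) ab); last first.
  by move=> i ia ib; rewrite xto ?subrr.
rewrite xta xtb /phi.
have hat : 0 < xp a - t by rewrite subr_gt0.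
have hbt : 0 < xp b + t by rewrite addr_gt0.
have La := ln_diff_le (x'pos a) (xpos a) hat.
have Lb := ln_diff_le (x'pos b) (xpos b) hbt.
have e1 : (xp a - (xp a - t)) / (xp a - t) = t * (1 / (xp a - t)).
  by field; rewrite gt_eqF.
have e2 : (xp b - (xp b + t)) / (xp b + t) = - t * (1 / (xp b + t)).
  by field; rewrite gt_eqF.
have e3 : (xp a - t - x' a) / x' a = (xp a - x' a) / x' a - t * (1 / x' a).
  by field; rewrite gt_eqF.
have e4 : (xp b + t - x' b) / x' b = (xp b - x' b) / x' b + t * (1 / x' b).
  by field; rewrite gt_eqF.
rewrite e3 e4; rewrite e1 in La; rewrite e2 in Lb.
move: La Lb.
move: (ln (x' a / (xp a - t))) (ln (x' a / xp a)) (ln (x' b / (xp b + t))) (ln (x' b / xp b)).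
move: (1 / (xp a - t)) (1 / (xp b + t)) (1 / x' a) (1 / x' b) ((xp a - x' a) / x' a) ((xp b - x' b) / x' b).
move=> *; nra.
Qed.
End H.

Lemma inv_lt (R : realType) (p q : R) : 0 < p -> 0 < q -> 1 / p < 1 / q -> q < p.
Proof. by move=> hp hq; rewrite !div1r ltf_pV2 ?posrE. Qed.

Theorem lemma16 (R : realType) (d : nat) (H eta : R) (x' l xp : 'I_d -> R) :
  0 < H -> 0 < eta ->
  in_simplex_pos x' ->
  linf l <= H ->
  is_argmin_F eta l x' xp ->
  eta <= 1 / (8 * H) ->
  forall a : 'I_d,
    (1 - 8 * eta * linf l) * x' a <= xp a /\
    xp a <= (1 + 8 * eta * linf l) * x' a.
Proof.
move=> hH heta hx' hL hmin heH a0.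
have [[xpos xsum] _] := hmin; have [x'pos x'sum] := hx'.
have Lge0 : 0 <= linf l by exact: bigmax0_ge0.
have labs : forall i, - linf l <= l i <= linf l.
  move=> i; rewrite -ler_norml.
  by apply: (@le_bigmax0 R _ _ (fun j => `|l j|)); exact: mem_index_enum.
move: Lge0 labs hL; set L := linf l => Lge0 labs hL.
set nu := 1 / xp a0 - 1 / x' a0 - eta * l a0.
have hnu : forall i, 1 / xp i = 1 / x' i + eta * l i + nu.
  move=> i; case: (eqVneq i a0) => [->|ia]; first by rewrite /nu; ring.
  have h1 := kkt hx' hmin ia.
  have ai : a0 != i by rewrite eq_sym.
  have h2 := kkt hx' hmin ai.
  rewrite /nu; lra.
have etaH : eta * H <= 1 / 8.
  move: heH; rewrite ler_pdivlMr ?mulr_gt0 // => h; lra.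
have etaL : eta * L <= eta * H by rewrite ler_pM2l.
have nu_le : nu <= eta * L.
  rewrite leNgt; apply/negP => hc.
  have hi : forall i, xp i < x' i.
    move=> i; apply: inv_lt => //; rewrite hnu.
    have /andP [li1 li2] := labs i.
    have : - (eta * L) <= eta * l i by rewrite -mulrN ler_pM2l.
    lra.
  have := sum_lt (f := xp) (g := x') (fun i => ltW (hi i)) (hi a0).
  by rewrite xsum x'sum ltxx.
have nu_ge : - (eta * L) <= nu.
  rewrite leNgt; apply/negP => hc.
  have hi : forall i, x' i < xp i.
    move=> i; apply: inv_lt => //; rewrite hnu.
    have /andP [li1 li2] := labs i.
    have : eta * l i <= eta * L by rewrite ler_pM2l.
    lra.
  have := sum_lt (f := x') (g := xp) (fun i => ltW (hi i)) (hi a0).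
  by rewrite xsum x'sum ltxx.
have p1 : x' a0 <= 1.
  by rewrite -x'sum; apply: le_sum_one => i; exact: ltW.
have /andP [la1 la2] := labs a0.
have sl : - (eta * L) <= eta * l a0 <= eta * L.
  by rewrite -mulrN !ler_pM2l // la1 la2.
move/andP: sl => [sl1 sl2].
have hq : xp a0 * (1 + x' a0 * (eta * l a0 + nu)) = x' a0.
  have := hnu a0 => h.
  have -> : 1 + x' a0 * (eta * l a0 + nu) = x' a0 * (1 / x' a0 + eta * l a0 + nu).
    by field; rewrite gt_eqF.
  rewrite -h; field; rewrite gt_eqF //.
have ee : 8 * eta * L = 4 * (2 * (eta * L)) by ring.
rewrite ee.
have := xpos a0; have := x'pos a0.
clear hnu.
move: hq p1 sl1 sl2 nu_le nu_ge etaL etaH.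
move: (xp a0) (x' a0) (eta * l a0) nu (eta * L) => q p s n w.
move=> hq p1 s1 s2 n1 n2 wH wH8 pp qp.
have w0 : 0 <= w by lra.
have hs1 : - (2 * w) <= s + n by lra.
have hs2 : s + n <= 2 * w by lra.
have hw : 2 * w <= 1 / 4 by lra.
move: hq hs1 hs2 hw; move: (s + n) (2 * w) => u v hq hs1 hs2 hw.
have v0 : 0 <= v by lra.
have h1 : q * p * (v + u) >= 0 by apply: mulr_ge0; [apply: mulr_ge0; lra | lra].
have h2 : q * p * (v - u) >= 0 by apply: mulr_ge0; [apply: mulr_ge0; lra | lra].
have h3 : q * v * (1 - p) >= 0 by apply: mulr_ge0; [apply: mulr_ge0; lra | lra].
have up : q * (1 - v) <= p by nra.
have lo : p <= q * (1 + v) by nra.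
split; nra.
Qed.
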